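(* Let $V$ be an $R$-module with a cyclic Whittaker vector $w\in V$ of type $\eta$ (so $V=Rw$). Then a vector $v\in V$ is a Whittaker vector of type $\eta$ if and only if $v=zw$ for some $z\in Z(R)$.
   Context: Let $f\in\mathbb{C}[H]$ be a polynomial. $R=R(f)$ is the associative $\mathbb{C}$-algebra generated by $E,F,H$ with relations $EF-FE=f(H)$, $HE-EH=E$, $HF-FH=-F$. Let $R(E)=\mathbb{C}[E]$. $Z(R)$ denotes the center of $R$ (it is the polynomial ring $\mathbb{C}[\Omega]$, $\Omega=2FE+u(H+1)$ where $f(H)=\tfrac12(u(H+1)-u(H))$). Fix an algebra homomorphism $\eta:R(E)\to\mathbb{C}$ with $\eta(E)\neq 0$. A vector $v$ of an $R$-module is a Whittaker vector of type $\eta$ if $Ev=\eta(E)v$; it is a cyclic Whittaker vector of $V$ if moreover $V=Rv$. *)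

(* Defs.v *)
From HB Require Import structures.
From mathcomp Require Import all_boot all_order all_algebra.
From mathcomp Require Import complex.
From mathcomp Require Import Rstruct.
Set Implicit Arguments. Unset Strict Implicit. Unset Printing Implicit Defensive.
Import Order.TTheory GRing.Theory Num.Theory.
Local Open Scope ring_scope.

Notation CC := (complex Rdefinitions.R).

(* Elements of the free associative C-algebra on E,F,H are represented  *)
(* by formal terms; R(f) is the quotient by the congruence [req f]      *)
(* generated by the associative C-algebra axioms and the defining       *)
(* relations EF-FE = f(H), HE-EH = E, HF-FH = -F.                       *)
Inductive term : Type :=
  | tC of CC
  | tE | tF | tH
  | tAdd of term & term
  | tMul of term & term.

Definition tOpp (t : term) : term := tMul (tC (-1)) t.
Definition tSub (s t : term) : term := tAdd s (tOpp t).

Fixpoint tpow (t : term) (n : nat) : term :=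
  match n with 0 => tC 1 | n'.+1 => tMul t (tpow t n') end.

Definition fH (f : {poly CC}) : term :=
  foldr (fun i acc => tAdd (tMul (tC f`_i) (tpow tH i)) acc) (tC 0)
        (iota 0 (size f)).

Inductive req (f : {poly CC}) : term -> term -> Prop :=
  | req_refl t : req f t t
  | req_sym s t : req f s t -> req f t s
  | req_trans s t u : req f s t -> req f t u -> req f s u
  | req_add s s' t t' : req f s s' -> req f t t' -> req f (tAdd s t) (tAdd s' t')
  | req_mul s s' t t' : req f s s' -> req f t t' -> req f (tMul s t) (tMul s' t')
  | req_addA s t u : req f (tAdd s (tAdd t u)) (tAdd (tAdd s t) u)
  | req_addC s t : req f (tAdd s t) (tAdd t s)
  | req_add0 t : req f (tAdd (tC 0) t) t
  | req_mulA s t u : req f (tMul s (tMul t u)) (tMul (tMul s t) u)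
  | req_mul1l t : req f (tMul (tC 1) t) t
  | req_mul1r t : req f (tMul t (tC 1)) t
  | req_mul0l t : req f (tMul (tC 0) t) (tC 0)
  | req_mulDl s t u : req f (tMul (tAdd s t) u) (tAdd (tMul s u) (tMul t u))
  | req_mulDr s t u : req f (tMul s (tAdd t u)) (tAdd (tMul s t) (tMul s u))
  | req_scalC c t : req f (tMul (tC c) t) (tMul t (tC c))
  | req_Cadd c d : req f (tAdd (tC c) (tC d)) (tC (c + d))
  | req_Cmul c d : req f (tMul (tC c) (tC d)) (tC (c * d))
  | req_EF : req f (tSub (tMul tE tF) (tMul tF tE)) (fH f)
  | req_HE : req f (tSub (tMul tH tE) (tMul tE tH)) tE
  | req_HF : req f (tSub (tMul tH tF) (tMul tF tH)) (tOpp tF).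

Definition in_center (f : {poly CC}) (z : term) : Prop :=
  forall t : term, req f (tMul z t) (tMul t z).

Definition peval_end (V : lmodType CC) (p : {poly CC}) (X : V -> V) (v : V) : V :=
  \sum_(i < size p) p`_i *: iter i X v.

Definition is_Rmodule (f : {poly CC}) (V : lmodType CC)
  (E F H : {linear V -> V}) : Prop :=
  [/\ forall v, E (F v) - F (E v) = peval_end f H v,
      forall v, H (E v) - E (H v) = E v &
      forall v, H (F v) - F (H v) = - F v].

Fixpoint act (V : lmodType CC) (E F H : {linear V -> V}) (t : term) (v : V) : V :=
  match t with
  | tC c => c *: v
  | tE => E v
  | tF => F v
  | tH => H v
  | tAdd s u => act E F H s v + act E F H u v
  | tMul s u => act E F H s (act E F H u v)
  end.

(* Whittaker vector of type eta, where eta : C[E] -> C is determined by eta(E) = a *)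
Definition whittaker (V : lmodType CC) (E : {linear V -> V}) (a : CC) (v : V) : Prop :=
  E v = a *: v.

Definition cyclic_gen (V : lmodType CC) (E F H : {linear V -> V}) (w : V) : Prop :=
  forall v : V, exists t : term, v = act E F H t w.

(* Main.v *)
Require Import Defs.
From HB Require Import structures.
From mathcomp Require Import all_boot all_order all_algebra.
From mathcomp Require Import complex Rstruct.
From Stdlib Require Import Setoid Morphisms.
Import GRing.Theory.
Local Open Scope ring_scope.

#[global] Instance req_Equiv f : Equivalence (req f).
Proof. split; [exact: req_refl | exact: req_sym | exact: req_trans]. Qed.
#[global] Instance tAdd_Proper f : Proper (req f ==> req f ==> req f) tAdd.
Proof. by move=> ? ? ? ? ? ?; apply: req_add. Qed.
#[global] Instance tMul_Proper f : Proper (req f ==> req f ==> req f) tMul.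
Proof. by move=> ? ? ? ? ? ?; apply: req_mul. Qed.

#[global] Hint Resolve req_refl : core.

Section G.
Context {f : {poly CC}}.
Lemma r_addA s t u : req f (tAdd s (tAdd t u)) (tAdd (tAdd s t) u). Proof. exact: req_addA. Qed.
Lemma r_addC s t : req f (tAdd s t) (tAdd t s). Proof. exact: req_addC. Qed.
Lemma r_add0 t : req f (tAdd (tC 0) t) t. Proof. exact: req_add0. Qed.
Lemma r_mulA s t u : req f (tMul s (tMul t u)) (tMul (tMul s t) u). Proof. exact: req_mulA. Qed.
Lemma r_mul1l t : req f (tMul (tC 1) t) t. Proof. exact: req_mul1l. Qed.
Lemma r_mul1r t : req f (tMul t (tC 1)) t. Proof. exact: req_mul1r. Qed.
Lemma r_mul0l t : req f (tMul (tC 0) t) (tC 0). Proof. exact: req_mul0l. Qed.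
Lemma r_mulDl s t u : req f (tMul (tAdd s t) u) (tAdd (tMul s u) (tMul t u)). Proof. exact: req_mulDl. Qed.
Lemma r_mulDr s t u : req f (tMul s (tAdd t u)) (tAdd (tMul s t) (tMul s u)). Proof. exact: req_mulDr. Qed.
Lemma r_scalC c t : req f (tMul (tC c) t) (tMul t (tC c)). Proof. exact: req_scalC. Qed.
End G.

Section Alg.
Variable f : {poly CC}.
Local Notation "s ≈ t" := (req f s t) (at level 70).

Let addA s t u : tAdd s (tAdd t u) ≈ tAdd (tAdd s t) u := req_addA f s t u.
Let addC s t : tAdd s t ≈ tAdd t s := req_addC f s t.
Let add0 t : tAdd (tC 0) t ≈ t := req_add0 f t.
Let mulA s t u : tMul s (tMul t u) ≈ tMul (tMul s t) u := req_mulA f s t u.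
Let mul1l t : tMul (tC 1) t ≈ t := req_mul1l f t.
Let mul1r t : tMul t (tC 1) ≈ t := req_mul1r f t.
Let mul0l t : tMul (tC 0) t ≈ tC 0 := req_mul0l f t.
Let mulDl s t u : tMul (tAdd s t) u ≈ tAdd (tMul s u) (tMul t u) := req_mulDl f s t u.
Let mulDr s t u : tMul s (tAdd t u) ≈ tAdd (tMul s t) (tMul s u) := req_mulDr f s t u.
Let scalC c t : tMul (tC c) t ≈ tMul t (tC c) := req_scalC f c t.
Let Cadd c d : tAdd (tC c) (tC d) ≈ tC (c + d) := req_Cadd f c d.
Let Cmul c d : tMul (tC c) (tC d) ≈ tC (c * d) := req_Cmul f c d.

Lemma addr0' t : tAdd t (tC 0) ≈ t.
Proof. rewrite addC. exact: add0. Qed.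
Lemma mul0r' t : tMul t (tC 0) ≈ tC 0.
Proof. rewrite -scalC. exact: mul0l. Qed.
Lemma addACA' a b c d : tAdd (tAdd a b) (tAdd c d) ≈ tAdd (tAdd a c) (tAdd b d).
Proof.
rewrite -!addA. apply: req_add; first reflexivity.
rewrite !addA (addC b c). reflexivity.
Qed.

Lemma CmulA c d t : tMul (tC c) (tMul (tC d) t) ≈ tMul (tC (c * d)) t.
Proof. by rewrite mulA Cmul. Qed.
Lemma CaddM c d t : tAdd (tMul (tC c) t) (tMul (tC d) t) ≈ tMul (tC (c + d)) t.
Proof. by rewrite -mulDl Cadd. Qed.
Lemma Ccomm c s t : tMul (tC c) (tMul s t) ≈ tMul s (tMul (tC c) t).
Proof. by rewrite mulA scalC -mulA. Qed.
Lemma oppK' b : tAdd (tOpp b) b ≈ tC 0.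
Proof.
transitivity (tAdd (tMul (tC (-1)) b) (tMul (tC 1) b)).
  by apply: req_add; [reflexivity| symmetry; apply: mul1l].
rewrite CaddM addNr. exact: mul0l.
Qed.
Lemma subK' a b c : tSub a b ≈ c -> a ≈ tAdd c b.
Proof.
move=> H. rewrite -H /tSub -addA oppK'. by rewrite addr0'.
Qed.

Lemma tpowSr t n : tpow t n.+1 ≈ tMul (tpow t n) t.
Proof.
elim: n => [|n IH]; first by rewrite /= mul1r mul1l.
change (tMul t (tpow t n.+1) ≈ tMul (tpow t n.+1) t).
transitivity (tMul t (tMul (tpow t n) t)); first by apply: req_mul.
by rewrite mulA.
Qed.

Definition Sl (t : term) (p : {poly CC}) z (l : seq nat) :=
  foldr (fun i acc => tAdd (tMul (tC p`_i) (tpow t i)) acc) z l.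

Lemma polyTE p : fH p = Sl tH p (tC 0) (iota 0 (size p)).
Proof. by []. Qed.

Lemma Sl_acc t (p : {poly CC}) z z' l : z ≈ z' -> Sl t p z l ≈ Sl t p z' l.
Proof. by move=> H; elim: l => [|i l IH] //=; rewrite IH. Qed.

Lemma Sl_zero t (p : {poly CC}) l : (forall i, i \in l -> p`_i = 0) -> Sl t p (tC 0) l ≈ tC 0.
Proof.
elim: l => [|i l IH] H /=; first by reflexivity.
rewrite IH; last by move=> j Hj; apply: H; rewrite inE Hj orbT.
by rewrite H ?inE ?eqxx // mul0l add0.
Qed.

Definition polyT t (p : {poly CC}) := Sl t p (tC 0) (iota 0 (size p)).

Lemma polyT_ext t (p : {poly CC}) n : (size p <= n)%N -> polyT t p ≈ Sl t p (tC 0) (iota 0 n).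
Proof.
move=> Hn; rewrite /polyT.
have -> : n = (size p + (n - size p))%N by rewrite subnKC.
rewrite iotaD /Sl foldr_cat -/(Sl t p _ _) -/(Sl t p _ _).
apply: Sl_acc; symmetry; apply: Sl_zero => i; rewrite mem_iota add0n => /andP[Hi _].
by rewrite nth_default.
Qed.

Lemma Sl_add t (p q : {poly CC}) l : Sl t (p + q) (tC 0) l ≈ tAdd (Sl t p (tC 0) l) (Sl t q (tC 0) l).
Proof.
elim: l => [|i l IH] /=; first by rewrite add0.
by rewrite IH coefD -Cadd mulDl addACA'.
Qed.

Lemma Sl_scale t c (p : {poly CC}) l : Sl t (c *: p) (tC 0) l ≈ tMul (tC c) (Sl t p (tC 0) l).
Proof.
elim: l => [|i l IH] /=; first by rewrite Cmul mulr0.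
by rewrite IH coefZ -Cmul -mulA mulDr.
Qed.

Lemma Sl_mulX t (p : {poly CC}) m n :
  Sl t (p * 'X) (tC 0) (iota m.+1 n) ≈ tMul (Sl t p (tC 0) (iota m n)) t.
Proof.
elim: n m => [|n IH] m; first by rewrite /= mul0l.
change (tAdd (tMul (tC (p * 'X)`_m.+1) (tpow t m.+1)) (Sl t (p * 'X) (tC 0) (iota m.+2 n)) ≈ tMul (tAdd (tMul (tC p`_m) (tpow t m)) (Sl t p (tC 0) (iota m.+1 n))) t).
have -> : (p * 'X)`_m.+1 = p`_m by rewrite coefMX.
by rewrite IH tpowSr mulA mulDl.
Qed.

Lemma polyT_add t (p q : {poly CC}) : polyT t (p + q) ≈ tAdd (polyT t p) (polyT t q).
Proof.
rewrite (@polyT_ext t _ _ (size_polyD p q)).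
rewrite (@polyT_ext t p (maxn (size p) (size q))) ?leq_maxl //.
rewrite (@polyT_ext t q (maxn (size p) (size q))) ?leq_maxr //.
exact: Sl_add.
Qed.

Lemma polyT_scale t c (p : {poly CC}) : polyT t (c *: p) ≈ tMul (tC c) (polyT t p).
Proof.
rewrite (@polyT_ext t _ _ (size_scale_leq c p)) Sl_scale. reflexivity.
Qed.

Lemma polyT_mulX t (p : {poly CC}) : polyT t (p * 'X) ≈ tMul (polyT t p) t.
Proof.
have Hs : (size (p * 'X)%R <= (size p).+1)%N.
  apply/leq_sizeP => j Hj; rewrite coefMX; case: ifP => // _.
  by rewrite nth_default // -ltnS (leq_trans Hj) // leqSpred.
rewrite (@polyT_ext t _ _ Hs) /= coefMX eqxx mul0l add0 Sl_mulX. reflexivity.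
Qed.

Lemma polyT_C t c : polyT t c%:P ≈ tC c.
Proof.
rewrite (@polyT_ext t _ 1) ?size_polyC_leq1 //= coefC eqxx.
by rewrite addr0' mul1r.
Qed.

Lemma polyT_0 t : polyT t 0 = tC 0.
Proof. by rewrite /polyT size_poly0. Qed.

Lemma polyT_step t (p : {poly CC}) c : polyT t (p * 'X + c%:P) ≈ tAdd (tMul (polyT t p) t) (tC c).
Proof. by rewrite polyT_add polyT_mulX polyT_C. Qed.

Lemma polyT_X t : polyT t 'X ≈ t.
Proof. by rewrite -[X in polyT _ X](GRing.mul1r 'X) polyT_mulX polyT_C mul1l. Qed.

Lemma polyT_mul t (p q : {poly CC}) : polyT t (p * q) ≈ tMul (polyT t p) (polyT t q).
Proof.
elim/poly_ind: q => [|q c IH]; first by rewrite mulr0 polyT_0 mul0r'.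
rewrite mulrDr mulrA [p * c%:P]mulrC mul_polyC polyT_add polyT_scale polyT_mulX IH.
rewrite polyT_step mulDr mulA scalC. reflexivity.
Qed.

Lemma polyT_opp t (p : {poly CC}) : polyT t (- p) ≈ tOpp (polyT t p).
Proof. by rewrite -scaleN1r polyT_scale. Qed.

Lemma polyT_shift e t s (p : {poly CC}) :
  tMul e t ≈ tMul (tAdd t (tC s)) e ->
  tMul e (polyT t p) ≈ tMul (polyT t (p \Po ('X + s%:P))) e.
Proof.
move=> He; elim/poly_ind: p => [|p c IH].
  by rewrite comp_poly0 polyT_0 mul0r' mul0l.
rewrite comp_polyD comp_polyM comp_polyX comp_polyC.
rewrite polyT_step polyT_add polyT_mul polyT_add polyT_X !polyT_C.
rewrite mulDr mulA IH -mulA He mulA -scalC mulDl. reflexivity.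
Qed.

Lemma polyT_comm t (p : {poly CC}) : tMul (polyT t p) t ≈ tMul t (polyT t p).
Proof.
symmetry.
rewrite (@polyT_shift t t 0 p); last by rewrite addr0'.
by rewrite polyC0 addr0 comp_polyXr.
Qed.

Definition commutes a b := tMul a b ≈ tMul b a.

Lemma center_gen z : commutes z tE -> commutes z tF -> commutes z tH -> in_center f z.
Proof.
move=> HE HF HH t; elim: t => [c| | | |s IHs u IHu|s IHs u IHu] //.
- by rewrite scalC.
- by rewrite mulDr mulDl IHs IHu.
- by rewrite mulA IHs -mulA IHu mulA.
Qed.

Lemma center_req a b : a ≈ b -> in_center f a -> in_center f b.
Proof. by move=> Hab Ha t; rewrite -Hab. Qed.

Lemma center_C c : in_center f (tC c).
Proof. by move=> t; rewrite scalC. Qed.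

Lemma center_add a b : in_center f a -> in_center f b -> in_center f (tAdd a b).
Proof. by move=> Ha Hb t; rewrite mulDl mulDr Ha Hb. Qed.

Lemma center_mul a b : in_center f a -> in_center f b -> in_center f (tMul a b).
Proof. by move=> Ha Hb t; rewrite -mulA Hb mulA Ha mulA. Qed.

Lemma center_polyT z p : in_center f z -> in_center f (polyT z p).
Proof.
move=> Hz; elim/poly_ind: p => [|p c IH]; first by rewrite polyT_0; apply: center_C.
apply: center_req; first by symmetry; apply: polyT_step.
by apply: center_add; [apply: center_mul|apply: center_C].
Qed.

Lemma HE_rel : tMul tH tE ≈ tAdd tE (tMul tE tH).
Proof. exact: subK' (req_HE f). Qed.
Lemma HF_rel : tMul tH tF ≈ tAdd (tOpp tF) (tMul tF tH).
Proof. exact: subK' (req_HF f). Qed.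
Lemma EF_rel : tMul tE tF ≈ tAdd (polyT tH f) (tMul tF tE).
Proof. exact: subK' (req_EF f). Qed.

Lemma E_shift : tMul tE tH ≈ tMul (tAdd tH (tC (-1))) tE.
Proof.
rewrite mulDl HE_rel (addC tE) -addA.
change (tMul (tC (-1)) tE) with (tOpp tE).
by rewrite (addC tE) oppK' addr0'.
Qed.

Lemma F_shift : tMul tF tH ≈ tMul (tAdd tH (tC 1)) tF.
Proof.
rewrite mulDl HF_rel mul1l (addC (tOpp tF)) -addA oppK' addr0'. reflexivity.
Qed.

Lemma E_polyH p : tMul tE (polyT tH p) ≈ tMul (polyT tH (p \Po ('X + (-1)%:P))) tE.
Proof. exact: polyT_shift E_shift. Qed.
Lemma F_polyH p : tMul tF (polyT tH p) ≈ tMul (polyT tH (p \Po ('X + 1%:P))) tF.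
Proof. exact: polyT_shift F_shift. Qed.

Definition Omega (U : {poly CC}) :=
  tAdd (tMul (tC 2) (tMul tF tE)) (polyT tH U).

Lemma FE_H : tMul (tMul tF tE) tH ≈ tMul tH (tMul tF tE).
Proof.
have Hm : tAdd tH (tC (-1)) ≈ polyT tH ('X + (-1)%:P).
  by rewrite polyT_add polyT_X polyT_C.
rewrite -mulA E_shift Hm mulA F_polyH.
rewrite comp_polyD comp_polyX comp_polyC -addrA -polyCD addrN addr0.
rewrite polyT_X mulA. reflexivity.
Qed.

Lemma Omega_central U :
  U = 2 *: f + (U \Po ('X + (-1)%:P)) ->
  U \Po ('X + 1%:P) = 2 *: (f \Po ('X + 1%:P)) + U ->
  in_center f (Omega U).
Proof.
move=> H1 H2; apply: center_gen; rewrite /commutes /Omega.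
-
  have HU : polyT tH U ≈ tAdd (tMul (tC 2) (polyT tH f)) (polyT tH (U \Po ('X + (-1)%:P))).
    have -> : polyT tH U = polyT tH (2 *: f + (U \Po ('X + (-1)%:P))) by rewrite -H1.
    by rewrite polyT_add polyT_scale.
  transitivity (tAdd (tMul (tC 2) (tMul (tMul tF tE) tE))
    (tAdd (tMul (tC 2) (tMul (polyT tH f) tE)) (tMul (polyT tH (U \Po ('X + (-1)%:P))) tE))).
    by rewrite mulDl HU mulDl -!mulA.
  rewrite mulDr E_polyH -Ccomm (mulA tE tF tE) EF_rel mulDl mulDr addA (addC (tMul (tC 2) (tMul (polyT tH f) tE))). reflexivity.
-
  have HU : polyT tH (U \Po ('X + 1%:P)) ≈ tAdd (tMul (tC 2) (polyT tH (f \Po ('X + 1%:P)))) (polyT tH U).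
    by rewrite H2 polyT_add polyT_scale.
  transitivity (tAdd (tMul (tC 2) (tMul (tMul tF tF) tE))
    (tAdd (tMul (tC 2) (tMul (polyT tH (f \Po ('X + 1%:P))) tF)) (tMul (polyT tH U) tF))).
    rewrite mulDl -mulA -(mulA tF tE tF) EF_rel mulDr F_polyH mulDr (addC (tMul (tC 2) _)).
    by rewrite -addA (mulA tF tF tE).
  by rewrite mulDr F_polyH HU mulDl -Ccomm -!mulA addA.
-
  rewrite mulDr mulDl -mulA FE_H.
  rewrite polyT_comm Ccomm. reflexivity.
Qed.

End Alg.

Fixpoint qq (s : CC) (k : nat) : {poly CC} :=
  if k is k'.+1 then qq s k' * ('X + (s * k'%:R)%:P) else 1.

Lemma qq_monic s k : qq s k \is monic.
Proof. elim: k => [|k IH] /=; first exact: monic1. by rewrite monicMr ?monicXaddC. Qed.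

Lemma size_qq s k : size (qq s k) = k.+1.
Proof.
elim: k => [|k IH] /=; first by rewrite size_poly1.
rewrite size_Mmonic ?monicXaddC ?size_XaddC ?IH ?addn2 //.
by rewrite -size_poly_eq0 IH.
Qed.

Lemma qq_lead s k : (qq s k)`_k = 1.
Proof. by have /monicP := qq_monic s k; rewrite lead_coefE size_qq. Qed.

Lemma qq_comp s k :
  qq s k.+1 \Po ('X + (- s)%:P) = ('X + (- s)%:P) * qq s k.
Proof.
elim: k => [|k IH].
  by rewrite /qq !mul1r mulr0 addr0 comp_polyX mulr1.
rewrite [qq s k.+2]/= comp_polyM IH comp_polyD comp_polyX comp_polyC -mulrA.
congr (_ * (_ * _)); rewrite -addrA -polyCD; congr (_ + _%:P).
by rewrite -natr1 mulrDr mulr1 addrC addrK.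
Qed.

Lemma qq_diff s k :
  qq s k.+1 \Po ('X + (- s)%:P) - qq s k.+1 = (- (s * k.+1%:R)) *: qq s k.
Proof.
rewrite qq_comp [qq s k.+1]/= mulrC -mulrBr.
have -> : 'X + (- s)%:P - ('X + (s * k%:R)%:P) = (- (s * k.+1%:R))%:P.
  rewrite opprD addrACA addrN add0r -polyCN -polyCD; congr (_%:P).
  by rewrite -natr1 mulrDr mulr1 opprD addrC.
by rewrite mulrC mul_polyC.
Qed.

Lemma qq_expand s (P : {poly CC} -> Prop) :
  P 0 -> (forall p q, P p -> P q -> P (p + q)) -> (forall c p, P p -> P (c *: p)) ->
  (forall k, P (qq s k)) -> forall p, P p.
Proof.
move=> P0 PD PZ Pq p.
have [n Hn] : exists n, (size p <= n)%N by exists (size p).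
elim: n p Hn => [|n IH] p Hn.
  by move: Hn; rewrite leqn0 size_poly_eq0 => /eqP ->.
case Hs: (size p <= n)%N; first exact: IH.
have Hsz : size p = n.+1 by apply/eqP; rewrite eqn_leq Hn ltnNge Hs.
have -> : p = (p - lead_coef p *: qq s n) + lead_coef p *: qq s n by rewrite subrK.
apply: PD; last exact: PZ.
apply: IH; apply/leq_sizeP => j Hj; rewrite coefB coefZ.
case: (eqVneq j n) => [->|Hne].
  by rewrite qq_lead mulr1 lead_coefE Hsz subrr.
have Hjn : (n < j)%N by rewrite ltn_neqAle eq_sym Hne Hj.
by rewrite !nth_default ?size_qq ?Hsz ?mulr0 ?subr0.
Qed.

Lemma delta_surj (g : {poly CC}) : exists u, u \Po ('X + 1%:P) - u = g.
Proof.
elim/(@qq_expand (-1)): g.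
- by exists 0; rewrite comp_poly0 subr0.
- move=> p q [u Hu] [v Hv]; exists (u + v).
  by rewrite comp_polyD -Hu -Hv opprD addrACA.
- move=> c p [u Hu]; exists (c *: u).
  by rewrite linearZ /= -scalerBr Hu.
- move=> k; exists ((- ((-1) * k.+1%:R))^-1 *: qq (-1) k.+1).
  have -> : 'X + 1%:P = 'X + (- (-1))%:P :> {poly CC} by rewrite opprK.
  rewrite linearZ /= -scalerBr qq_diff scalerA mulVf ?scale1r //.
  by rewrite mulN1r opprK Num.Theory.pnatr_eq0.
Qed.

Lemma U_exists (f : {poly CC}) : exists U : {poly CC},
  U = 2 *: f + (U \Po ('X + (-1)%:P)) /\
  U \Po ('X + 1%:P) = 2 *: (f \Po ('X + 1%:P)) + U.
Proof.
have [u Hu] := delta_surj (2 *: f).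
exists (u \Po ('X + 1%:P)); split.
  rewrite -comp_polyA comp_polyD comp_polyX comp_polyC -addrA -polyCD addNr addr0.
  by rewrite comp_polyXr -Hu subrK.
have -> : 2 *: (f \Po ('X + 1%:P)) = (2 *: f) \Po ('X + 1%:P) by rewrite linearZ.
by rewrite -Hu linearB /= subrK.
Qed.

Section Mod.
Variables (f : {poly CC}) (V : lmodType CC) (E F H : {linear V -> V}).
Hypothesis HV : is_Rmodule f E F H.
Local Notation act := (act E F H).

Lemma act_add t x y : act t (x + y) = act t x + act t y.
Proof.
elim: t x y => [c| | | |s IHs u IHu|s IHs u IHu] x y /=.
- exact: scalerDr.
- exact: raddfD.
- exact: raddfD.
- exact: raddfD.
- by rewrite IHs IHu addrACA.
- by rewrite IHu IHs.
Qed.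

Lemma act_scale t c x : act t (c *: x) = c *: act t x.
Proof.
elim: t x => [d| | | |s IHs u IHu|s IHs u IHu] x /=.
- by rewrite !scalerA mulrC.
- exact: linearZ.
- exact: linearZ.
- exact: linearZ.
- by rewrite IHs IHu scalerDr.
- by rewrite IHu IHs.
Qed.

Lemma act0 t : act t 0 = 0.
Proof. by have := act_scale t 0 0; rewrite !scale0r. Qed.

Lemma act_opp t x : act t (- x) = - act t x.
Proof. by rewrite -scaleN1r act_scale scaleN1r. Qed.

Lemma act_tpow t i x : act (tpow t i) x = iter i (act t) x.
Proof. elim: i => [|i IH] /=; [exact: scale1r | by rewrite IH]. Qed.

Lemma act_Sl t (p : {poly CC}) l x :
  act (Sl t p (tC 0) l) x = \sum_(i <- l) p`_i *: iter i (act t) x.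
Proof.
elim: l => [|i l IH] /=; first by rewrite big_nil scale0r.
by rewrite big_cons IH act_tpow.
Qed.

Lemma act_polyT t (p : {poly CC}) x :
  act (polyT t p) x = \sum_(i < size p) p`_i *: iter i (act t) x.
Proof.
rewrite /polyT act_Sl.
have -> : iota 0 (size p) = index_iota 0 (size p) by rewrite /index_iota subn0.
by rewrite big_mkord.
Qed.

Lemma act_sound s t : req f s t -> forall x, act s x = act t x.
Proof.
case: HV => HEF HHE HHF.
elim=> {s t} /=.
- by [].
- by move=> s t _ IH x; rewrite IH.
- by move=> s t u _ IH1 _ IH2 x; rewrite IH1 IH2.
- by move=> s s' t t' _ IH1 _ IH2 x; rewrite IH1 IH2.
- by move=> s s' t t' _ IH1 _ IH2 x; rewrite IH2 IH1.
- by move=> s t u x; rewrite addrA.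
- by move=> s t x; rewrite addrC.
- by move=> t x; rewrite scale0r add0r.
- by [].
- by move=> t x; rewrite scale1r.
- by move=> t x; rewrite scale1r.
- by move=> t x; rewrite !scale0r.
- by [].
- by move=> s t u x; rewrite act_add.
- by move=> c t x; rewrite act_scale.
- by move=> c d x; rewrite scalerDl.
- by move=> c d x; rewrite scalerA.
- by move=> x; rewrite !scaleN1r HEF -/(polyT tH f) act_polyT.
- by move=> x; rewrite !scaleN1r HHE.
- by move=> x; rewrite !scaleN1r HHF.
Qed.

End Mod.

Section Main.
Variables (f : {poly CC}) (V : lmodType CC) (E F H : {linear V -> V}).
Hypothesis HV : is_Rmodule f E F H.
Variables (a : CC) (w : V) (U : {poly CC}).
Hypothesis Ha : a != 0.
Hypothesis Hw : whittaker E a w.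
Hypothesis HU1 : U = 2 *: f + (U \Po ('X + (-1)%:P)).
Hypothesis HU2 : U \Po ('X + 1%:P) = 2 *: (f \Po ('X + 1%:P)) + U.
Local Notation act := (act E F H).
Local Notation "s ≈ t" := (req f s t) (at level 70).
Local Notation Om := (Omega U).

Lemma Om_c : in_center f Om.
Proof. exact: Omega_central. Qed.

Lemma act_mul s t x : act (tMul s t) x = act s (act t x). Proof. by []. Qed.

Lemma aeq s t x : s ≈ t -> act s x = act t x.
Proof. by move=> /(@act_sound f V E F H HV); apply. Qed.

Lemma Pc c : in_center f (polyT Om c).
Proof. exact/center_polyT/Om_c. Qed.

Definition gen (c p : {poly CC}) := act (tMul (polyT Om c) (polyT tH p)) w.

Lemma gen_addl c1 c2 p : gen (c1 + c2) p = gen c1 p + gen c2 p.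
Proof.
rewrite /gen (@aeq _ (tAdd (tMul (polyT Om c1) (polyT tH p)) (tMul (polyT Om c2) (polyT tH p)))) //.
by rewrite polyT_add r_mulDl.
Qed.

Lemma gen_addr c p1 p2 : gen c (p1 + p2) = gen c p1 + gen c p2.
Proof.
rewrite /gen (@aeq _ (tAdd (tMul (polyT Om c) (polyT tH p1)) (tMul (polyT Om c) (polyT tH p2)))) //.
by rewrite polyT_add r_mulDr.
Qed.

Lemma gen_scalel k c p : gen (k *: c) p = k *: gen c p.
Proof.
rewrite /gen (@aeq _ (tMul (tC k) (tMul (polyT Om c) (polyT tH p)))) //.
by rewrite polyT_scale r_mulA.
Qed.

Lemma gen_scaler k c p : gen c (k *: p) = k *: gen c p.
Proof.
rewrite /gen (@aeq _ (tMul (tC k) (tMul (polyT Om c) (polyT tH p)))) //.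
by rewrite polyT_scale Ccomm.
Qed.

Lemma gen0l p : gen 0 p = 0.
Proof. by rewrite -(scale0r 0) gen_scalel scale0r. Qed.

Lemma gen0r c : gen c 0 = 0.
Proof. by rewrite -(scale0r 0) gen_scaler scale0r. Qed.

Lemma gen_1 c : gen c 1 = act (polyT Om c) w.
Proof. by rewrite /gen (@aeq _ (polyT Om c)) // polyT_C r_mul1r. Qed.

Lemma gen_r c p : gen c p = act (polyT tH p) (gen c 1).
Proof.
rewrite gen_1 /gen (@aeq _ (tMul (polyT tH p) (polyT Om c))) //.
exact: Pc.
Qed.

Lemma gen_H c p : act tH (gen c p) = gen c ('X * p).
Proof.
rewrite /gen -[act tH _]/(act (tMul tH (tMul (polyT Om c) (polyT tH p))) w).
apply: aeq.
rewrite polyT_mul polyT_X r_mulA -(Pc c tH) -r_mulA. reflexivity.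
Qed.

Lemma gen_E c p : act tE (gen c p) = a *: gen c (p \Po ('X + (-1)%:P)).
Proof.
rewrite /gen -[act tE _]/(act (tMul tE (tMul (polyT Om c) (polyT tH p))) w).
rewrite (@aeq _ (tMul (tMul (polyT Om c) (polyT tH (p \Po ('X + (-1)%:P)))) tE)).
  by rewrite act_mul [act tE w]/= (Hw : E w = a *: w) act_scale.
rewrite r_mulA -(Pc c tE) -r_mulA E_polyH r_mulA. reflexivity.
Qed.

Lemma two_a : 2 * a != 0.
Proof. by rewrite mulf_neq0 // Num.Theory.pnatr_eq0. Qed.

Lemma Fw : F w = (2 * a)^-1 *: (act Om w - act (polyT tH U) w).
Proof.
have -> : act Om w = 2 *: F (E w) + act (polyT tH U) w by [].
rewrite addrK (Hw : E w = a *: w) [F (a *: w)]linearZ /= scalerA scalerA mulVf ?scale1r //.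
exact: two_a.
Qed.

Lemma gen_F c p : act tF (gen c p) =
  (2 * a)^-1 *: (gen (c * 'X) (p \Po ('X + 1%:P)) - gen c ((p \Po ('X + 1%:P)) * U)).
Proof.
set p' := p \Po ('X + 1%:P).
set X := tMul (polyT Om c) (polyT tH p').
rewrite /gen -[act tF _]/(act (tMul tF (tMul (polyT Om c) (polyT tH p))) w).
rewrite (@aeq _ (tMul X tF)); last first.
  rewrite /X r_mulA -(Pc c tF) -r_mulA F_polyH r_mulA. reflexivity.
rewrite act_mul [act tF w]/= Fw act_scale act_add act_opp -!act_mul.
congr (_ *: (_ - _)); apply: aeq; rewrite /X.
- rewrite -r_mulA -(Om_c (polyT tH p')) r_mulA -polyT_mulX. reflexivity.
- rewrite -r_mulA polyT_mul. reflexivity.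
Qed.

Definition Ev (P : {poly {poly CC}}) := \sum_(k < size P) gen P`_k (qq 1 k).
Definition inW x := exists P, x = Ev P.

Lemma EvE (P : {poly {poly CC}}) n : (size P <= n)%N -> Ev P = \sum_(k < n) gen P`_k (qq 1 k).
Proof.
move=> Hn; rewrite /Ev -(subnKC Hn).
elim: (n - size P)%N => [|e IH]; first by rewrite addn0.
rewrite addnS big_ord_recr /= -IH nth_default ?leq_addr // gen0l addr0 //.
Qed.

Lemma inW0 : inW 0.
Proof. by exists 0; rewrite /Ev size_poly0 big_ord0. Qed.

Lemma inW_add x y : inW x -> inW y -> inW (x + y).
Proof.
move=> [P ->] [Q ->]; exists (P + Q).
rewrite (@EvE P (maxn (size P) (size Q))) ?leq_maxl //.
rewrite (@EvE Q (maxn (size P) (size Q))) ?leq_maxr //.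
rewrite (@EvE (P + Q) (maxn (size P) (size Q))) ?size_polyD //.
by rewrite -big_split; apply: eq_bigr => k _; rewrite coefD gen_addl.
Qed.

Lemma inW_scale k x : inW x -> inW (k *: x).
Proof.
move=> [P ->]; exists (k%:P *: P).
rewrite (@EvE (k%:P *: P) (size P)) ?size_scale_leq // /Ev scaler_sumr.
by apply: eq_bigr => i _; rewrite coefZ mul_polyC gen_scalel.
Qed.

Lemma inW_single c k : inW (gen c (qq 1 k)).
Proof.
exists (c%:P * 'X^k).
rewrite (@EvE _ k.+1); last first.
  by apply/leq_sizeP => j Hj; rewrite coefCM coefXn gtn_eqF // mulr0.
rewrite big_ord_recr /= coefCM coefXn eqxx mulr1 big1 ?add0r // => i _.
by rewrite coefCM coefXn /= ltn_eqF // mulr0 gen0l.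
Qed.

Lemma inW_gen c p : inW (gen c p).
Proof.
elim/(@qq_expand 1): p.
- by rewrite gen0r; exact: inW0.
- by move=> p q Hp Hq; rewrite gen_addr; apply: inW_add.
- by move=> k p Hp; rewrite gen_scaler; apply: inW_scale.
- exact: inW_single.
Qed.

Lemma inW_lin (L : V -> V) :
  (forall x y, L (x + y) = L x + L y) -> L 0 = 0 ->
  (forall c p, inW (L (gen c p))) -> forall x, inW x -> inW (L x).
Proof.
move=> LD L0 Lg x [P ->]; rewrite /Ev.
elim/big_ind: _ => [|y z Hy Hz|i _].
- by rewrite L0; exact: inW0.
- by rewrite LD; apply: inW_add.
- exact: Lg.
Qed.

Lemma inW_act t x : inW x -> inW (act t x).
Proof.
elim: t x => [c| | | |s IHs u IHu|s IHs u IHu] x Hx /=.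
- exact: inW_scale.
- apply: (@inW_lin E) => //; [exact: raddfD | exact: raddf0 |].
  by move=> c p; rewrite -[E _]/(act tE _) gen_E; apply/inW_scale/inW_gen.
- apply: (@inW_lin F) => //; [exact: raddfD | exact: raddf0 |].
  move=> c p; rewrite -[F _]/(act tF _) gen_F; apply/inW_scale.
  by rewrite -scaleN1r; apply/inW_add; [|apply: inW_scale]; apply: inW_gen.
- apply: (@inW_lin H) => //; [exact: raddfD | exact: raddf0 |].
  by move=> c p; rewrite -[H _]/(act tH _) gen_H; apply/inW_gen.
- by apply: inW_add; [apply: IHs | apply: IHu].
- by apply: IHs; apply: IHu.
Qed.

Lemma inW_w : inW w.
Proof.
have -> : w = gen 1 1.
  rewrite gen_1 (@aeq _ (tC 1)); first by rewrite /= scale1r.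
  by rewrite -polyC1 polyT_C.
exact: inW_gen.
Qed.

Definition T x := a^-1 *: act tE x - x.

Lemma T_add x y : T (x + y) = T x + T y.
Proof. by rewrite /T act_add scalerDr opprD addrACA. Qed.
Lemma T_scale k x : T (k *: x) = k *: T x.
Proof. by rewrite /T act_scale scalerA mulrC -scalerA scalerBr. Qed.
Lemma T0 : T 0 = 0.
Proof. by rewrite /T act0 scaler0 subr0. Qed.

Lemma iterT_add j x y : iter j T (x + y) = iter j T x + iter j T y.
Proof. by elim: j => [|j IH] //=; rewrite IH T_add. Qed.
Lemma iterT_scale j k x : iter j T (k *: x) = k *: iter j T x.
Proof. by elim: j => [|j IH] //=; rewrite IH T_scale. Qed.
Lemma iterT0 j : iter j T 0 = 0.
Proof. by elim: j => [|j IH] //=; rewrite IH T0. Qed.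

Lemma T_gen c p : T (gen c p) = gen c (p \Po ('X + (-1)%:P) - p).
Proof.
rewrite /T gen_E scalerA mulVf // scale1r gen_addr -[- p]scaleN1r gen_scaler.
by rewrite scaleN1r.
Qed.

Lemma T_gen0 c : T (gen c (qq 1 0)) = 0.
Proof. by rewrite T_gen /= -polyC1 comp_polyC subrr gen0r. Qed.

Lemma T_genS c k : T (gen c (qq 1 k.+1)) = (- k.+1%:R) *: gen c (qq 1 k).
Proof. by rewrite T_gen qq_diff gen_scaler mul1r. Qed.

Lemma iterT_lt j k c : (k < j)%N -> iter j T (gen c (qq 1 k)) = 0.
Proof.
elim: j k => [|j IH] k // Hk.
rewrite iterSr; case: k Hk => [|k] Hk; first by rewrite T_gen0 iterT0.
by rewrite T_genS iterT_scale IH ?scaler0.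
Qed.

Lemma iterT_eq j c : iter j T (gen c (qq 1 j)) = ((-1) ^+ j * j`!%:R) *: gen c 1.
Proof.
elim: j => [|j IH]; first by rewrite /= mul1r scale1r.
rewrite iterSr T_genS iterT_scale IH scalerA; congr (_ *: _).
rewrite factS natrM exprS; rewrite -mulN1r.
by rewrite !mulrA; congr (_ * _); rewrite -!mulrA; congr (_ * _); rewrite mulrC.
Qed.

Lemma iterT_sum m j (C : nat -> {poly CC}) : (m <= j)%N ->
  iter j T (\sum_(k < m) gen (C k) (qq 1 k)) = 0.
Proof.
elim: m => [|m IH] Hm; first by rewrite big_ord0 iterT0.
by rewrite big_ord_recr /= iterT_add IH ?(ltnW Hm) // iterT_lt // addr0.
Qed.

Lemma descent n : forall C : nat -> {poly CC},
  T (\sum_(k < n.+1) gen (C k) (qq 1 k)) = 0 ->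
  exists c, \sum_(k < n.+1) gen (C k) (qq 1 k) = gen c 1.
Proof.
elim: n => [|n IH] C HT.
  by exists (C 0%N); rewrite big_ord1.
have Hsplit : \sum_(k < n.+2) gen (C k) (qq 1 k) =
    \sum_(k < n.+1) gen (C k) (qq 1 k) + gen (C n.+1) (qq 1 n.+1) by rewrite big_ord_recr.
have Hit : iter n.+1 T (\sum_(k < n.+2) gen (C k) (qq 1 k)) = 0.
  by rewrite iterSr HT iterT0.
move: Hit; rewrite [in X in X -> _]Hsplit iterT_add iterT_sum // add0r iterT_eq.
move/eqP; rewrite scaler_eq0 mulf_eq0 signr_eq0 orFb Num.Theory.pnatr_eq0.
rewrite gtn_eqF ?fact_gt0 // orFb => /eqP Hg.
have Hg' : gen (C n.+1) (qq 1 n.+1) = 0 by rewrite gen_r Hg act0.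
rewrite Hsplit Hg' addr0; apply: IH.
by move: HT; rewrite Hsplit Hg' addr0.
Qed.

Lemma main_fwd (Hcyc : cyclic_gen E F H w) v :
  whittaker E a v -> exists z, in_center f z /\ v = act z w.
Proof.
move=> Hv; have [t Ht] := Hcyc v.
have : inW (act t w) by apply: inW_act; apply: inW_w.
rewrite -Ht => -[P HP].
have HT : T v = 0 by rewrite /T -[act tE v]/(E v) (Hv : E v = a *: v) scalerA mulVf // scale1r subrr.
move: HT; rewrite HP (@EvE P (size P).+1) // => HT.
have [c Hc] := descent (size P) _ HT.
exists (polyT Om c); split; first exact: Pc.
by rewrite Hc gen_1.
Qed.

End Main.

Theorem mainTheorem4 (f : {poly CC}) (V : lmodType CC)
  (E F H : {linear V -> V}) (HV : is_Rmodule f E F H)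
  (a : CC) (Ha : a != 0)
  (w : V) (Hw : whittaker E a w) (Hcyc : cyclic_gen E F H w) (v : V) :
  whittaker E a v <-> exists z : term, in_center f z /\ v = act E F H z w.
Proof.
split.
- have [U [HU1 HU2]] := U_exists f.
  exact: (@main_fwd f V E F H HV a w U Ha Hw HU1 HU2 Hcyc v).
- move=> [z [Hz ->]].
  rewrite /whittaker -[E _]/(act E F H (tMul tE z) w).
  rewrite (@act_sound f V E F H HV _ _ (req_sym (Hz tE))) -[act E F H (tMul z tE) w]/(act E F H z (E w)).
  by rewrite (Hw : E w = a *: w) act_scale.
Qed.
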